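(* Let $H$ be any Hopf algebra over a field $k$ (not necessarily finite dimensional). Then every Hopf bimodule over $H$ can be embedded in an injective Hopf bimodule: for every Hopf bimodule $M$ there exist an injective object $J$ of the category $\mathcal{H}$ of Hopf bimodules over $H$ and an injective morphism of Hopf bimodules $M \hookrightarrow J$. In other words, $\mathcal{H}$ has enough injectives.
   Context: $H=(H,\mu,\eta,\Delta,\varepsilon,S)$ is a Hopf algebra over a commutative field $k$, and $\otimes=\otimes_k$. A Hopf bimodule over $H$ is a vector space $M$ that is an $H$-bimodule and an $H$-bicomodule (left coaction $m\mapsto m_{(-1)}\otimes m_{(0)}$, right coaction $m\mapsto m_{(0)}\otimes m_{(1)}$) such that both coactions are $H$-bimodule maps, where $H\otimes M$ and $M\otimes H$ carry the diagonal bimodule structures (equivalently, the actions are bicomodule maps). The category $\mathcal{H}$ has Hopf bimodules as objects and, as morphisms, linear maps that are simultaneously bimodule and bicomodule maps. An object $J$ of $\mathcal{H}$ is injective if $\mathrm{Hom}_{\mathcal{H}}(-,J)$ is exact. *)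

(* Defs.v *)
(* MathComp has no tensor product
   of (possibly infinite-dimensional) vector spaces, so elements of tensor
   products are represented by finite formal sums  sum_i a_i (x) b_i  (a list
   of pairs / triples), and two such representatives are identified exactly
   when they have the same image in the tensor product, i.e. (universal
   property of the tensor product) when every bilinear (resp. trilinear) map
   into every k-vector space takes the same value on them. *)
From HB Require Import structures.
From mathcomp Require Import all_boot all_order all_algebra.

Set Implicit Arguments.
Unset Strict Implicit.
Unset Printing Implicit Defensive.

Import Order.TTheory GRing.Theory Num.Theory.
Local Open Scope ring_scope.

Section Tensors.
Variable k : fieldType.

Definition klinear (A U : lmodType k) (f : A -> U) : Prop :=
  forall (c : k) (x y : A), f (c *: x + y) = c *: f x + f y.

Definition bilinear_map (A B U : lmodType k) (phi : A -> B -> U) : Prop :=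
  (forall b : B, klinear (fun a => phi a b)) /\
  (forall a : A, klinear (phi a)).

Definition trilinear_map (A B C U : lmodType k) (phi : A -> B -> C -> U) : Prop :=
  (forall (b : B) (c : C), klinear (fun a => phi a b c)) /\
  (forall (a : A) (c : C), klinear (fun b => phi a b c)) /\
  (forall (a : A) (b : B), klinear (phi a b)).

(* [:: (a_1,b_1); ...; (a_n,b_n)] represents  sum_i a_i (x) b_i  in A (x) B *)
Definition teq2 (A B : lmodType k) (s t : seq (A * B)) : Prop :=
  forall (U : lmodType k) (phi : A -> B -> U), bilinear_map phi ->
    \sum_(p <- s) phi p.1 p.2 = \sum_(p <- t) phi p.1 p.2.

(* [:: ((a_1,b_1),c_1); ...] represents  sum_i a_i (x) b_i (x) c_i  in A (x) B (x) C *)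
Definition teq3 (A B C : lmodType k) (s t : seq (A * B * C)) : Prop :=
  forall (U : lmodType k) (phi : A -> B -> C -> U), trilinear_map phi ->
    \sum_(p <- s) phi p.1.1 p.1.2 p.2 = \sum_(p <- t) phi p.1.1 p.1.2 p.2.

Definition tscale (A B : lmodType k) (c : k) (s : seq (A * B)) : seq (A * B) :=
  [seq (c *: p.1, p.2) | p <- s].

Definition tlinear (V A B : lmodType k) (f : V -> seq (A * B)) : Prop :=
  forall (c : k) (x y : V), teq2 (f (c *: x + y)) (tscale c (f x) ++ f y).

End Tensors.

Section Hopf.
Variable k : fieldType.

Record hopf_algebra (H : algType k) := HopfAlgebra {
  comul : H -> seq (H * H);
  counit : H -> k;
  antipode : H -> H;
  comul_lin : tlinear comul;
  comul_coassoc : forall h : H,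
    teq3 [seq (q.1, q.2, p.2) | p <- comul h, q <- comul p.1]
         [seq (p.1, q.1, q.2) | p <- comul h, q <- comul p.2];
  counit_lin : forall (c : k) (x y : H), counit (c *: x + y) = c * counit x + counit y;
  counit_l : forall h : H, \sum_(p <- comul h) counit p.1 *: p.2 = h;
  counit_r : forall h : H, \sum_(p <- comul h) counit p.2 *: p.1 = h;
  comul_mul : forall a b : H,
    teq2 (comul (a * b)) [seq (p.1 * q.1, p.2 * q.2) | p <- comul a, q <- comul b];
  comul_one : teq2 (comul 1) [:: (1, 1)];
  counit_mul : forall a b : H, counit (a * b) = counit a * counit b;
  counit_one : counit 1 = 1;
  antipode_lin : klinear antipode;
  antipode_l : forall h : H, \sum_(p <- comul h) antipode p.1 * p.2 = (counit h)%:A;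
  antipode_r : forall h : H, \sum_(p <- comul h) p.1 * antipode p.2 = (counit h)%:A
}.

Variables (H : algType k) (HA : hopf_algebra H).
Local Notation D := (comul HA).
Local Notation eps := (counit HA).

Record hopf_bimodule := HopfBimodule {
  hb_sort : lmodType k;
  lact : H -> hb_sort -> hb_sort;
  ract : hb_sort -> H -> hb_sort;
  lcoact : hb_sort -> seq (H * hb_sort);
  rcoact : hb_sort -> seq (hb_sort * H);
  lact_linl : forall m : hb_sort, klinear (fun h : H => lact h m);
  lact_linr : forall h : H, klinear (lact h);
  ract_linl : forall h : H, klinear (fun m : hb_sort => ract m h);
  ract_linr : forall m : hb_sort, klinear (ract m);
  lact_mul : forall (a b : H) (m : hb_sort), lact (a * b) m = lact a (lact b m);
  lact_one : forall m : hb_sort, lact 1 m = m;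
  ract_mul : forall (m : hb_sort) (a b : H), ract m (a * b) = ract (ract m a) b;
  ract_one : forall m : hb_sort, ract m 1 = m;
  lract : forall (a b : H) (m : hb_sort), ract (lact a m) b = lact a (ract m b);
  lcoact_lin : tlinear lcoact;
  rcoact_lin : tlinear rcoact;
  lcoact_coassoc : forall m : hb_sort,
    teq3 [seq (q.1, q.2, p.2) | p <- lcoact m, q <- D p.1]
         [seq (p.1, q.1, q.2) | p <- lcoact m, q <- lcoact p.2];
  lcoact_counit : forall m : hb_sort, \sum_(p <- lcoact m) eps p.1 *: p.2 = m;
  rcoact_coassoc : forall m : hb_sort,
    teq3 [seq (q.1, q.2, p.2) | p <- rcoact m, q <- rcoact p.1]
         [seq (p.1, q.1, q.2) | p <- rcoact m, q <- D p.2];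
  rcoact_counit : forall m : hb_sort, \sum_(p <- rcoact m) eps p.2 *: p.1 = m;
  bicomodule : forall m : hb_sort,
    teq3 [seq (q.1, q.2, p.2) | p <- rcoact m, q <- lcoact p.1]
         [seq (p.1, q.1, q.2) | p <- lcoact m, q <- rcoact p.2];
  (* both coactions are H-bimodule maps (diagonal structures on H (x) M, M (x) H) *)
  lcoact_lact : forall (h : H) (m : hb_sort),
    teq2 (lcoact (lact h m)) [seq (q.1 * p.1, lact q.2 p.2) | q <- D h, p <- lcoact m];
  lcoact_ract : forall (m : hb_sort) (h : H),
    teq2 (lcoact (ract m h)) [seq (p.1 * q.1, ract p.2 q.2) | p <- lcoact m, q <- D h];
  rcoact_lact : forall (h : H) (m : hb_sort),
    teq2 (rcoact (lact h m)) [seq (lact q.1 p.1, q.2 * p.2) | q <- D h, p <- rcoact m];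
  rcoact_ract : forall (m : hb_sort) (h : H),
    teq2 (rcoact (ract m h)) [seq (ract p.1 q.1, p.2 * q.2) | p <- rcoact m, q <- D h]
}.

Definition hb_morphism (M N : hopf_bimodule) (f : hb_sort M -> hb_sort N) : Prop :=
  [/\ klinear f,
      forall (h : H) (m : hb_sort M), f (lact h m) = lact h (f m),
      forall (m : hb_sort M) (h : H), f (ract m h) = ract (f m) h,
      forall m : hb_sort M, teq2 (lcoact (f m)) [seq (p.1, f p.2) | p <- lcoact m]
    & forall m : hb_sort M, teq2 (rcoact (f m)) [seq (f p.1, p.2) | p <- rcoact m]].

Definition short_exact (A B C : hopf_bimodule)
    (i : hb_sort A -> hb_sort B) (p : hb_sort B -> hb_sort C) : Prop :=
  [/\ hb_morphism i, hb_morphism p, injective i,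
      (forall c : hb_sort C, exists b, p b = c)
    & forall b : hb_sort B, p b = 0 <-> exists a, b = i a].

(* J is injective: Hom_H(-, J) is exact, i.e. it sends every short exact
   sequence 0 -> A -> B -> C -> 0 to an exact sequence
   0 -> Hom(C,J) -> Hom(B,J) -> Hom(A,J) -> 0 *)
Definition hb_injective (J : hopf_bimodule) : Prop :=
  forall (A B C : hopf_bimodule) (i : hb_sort A -> hb_sort B)
         (p : hb_sort B -> hb_sort C),
  short_exact i p ->
  [/\
      forall h : hb_sort C -> hb_sort J, hb_morphism h ->
        (forall b, h (p b) = 0) -> forall c, h c = 0,
      forall g : hb_sort B -> hb_sort J, hb_morphism g ->
        ((forall a, g (i a) = 0) <->
         exists h : hb_sort C -> hb_sort J, hb_morphism h /\ forall b, g b = h (p b))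
    &
      forall g : hb_sort A -> hb_sort J, hb_morphism g ->
        exists g' : hb_sort B -> hb_sort J, hb_morphism g' /\ forall a, g a = g' (i a)].

End Hopf.

(* Main.v *)
Require Import Defs.
From HB Require Import structures.
From mathcomp Require Import all_boot all_order all_algebra.
From mathcomp Require Import boolp ring.
From mathcomp Require classical_sets.

Set Implicit Arguments.
Unset Strict Implicit.
Unset Printing Implicit Defensive.

Import Order.TTheory GRing.Theory Num.Theory.
Local Open Scope ring_scope.

Section Gen.
Variable k : fieldType.

Lemma kl_add (A U : lmodType k) (f : A -> U) : klinear f ->
  forall x y, f (x + y) = f x + f y.
Proof. by move=> Hf x y; rewrite -[x in LHS]scale1r Hf scale1r. Qed.

Lemma kl0 (A U : lmodType k) (f : A -> U) : klinear f -> f 0 = 0.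
Proof.
move=> Hf; apply/(addrI (f 0)); by rewrite -kl_add // !addr0.
Qed.

Lemma klZ (A U : lmodType k) (f : A -> U) : klinear f ->
  forall c x, f (c *: x) = c *: f x.
Proof. by move=> Hf c x; rewrite -[c *: x]addr0 Hf kl0 // addr0. Qed.

Lemma kl_sum (A U : lmodType k) (f : A -> U) I (r : seq I) (F : I -> A) :
  klinear f -> f (\sum_(i <- r) F i) = \sum_(i <- r) f (F i).
Proof.
move=> Hf; elim: r => [|i r IH]; first by rewrite !big_nil kl0.
by rewrite !big_cons kl_add // IH.
Qed.

Lemma klinear_comp (A B U : lmodType k) (f : A -> B) (g : B -> U) :
  klinear f -> klinear g -> klinear (g \o f).
Proof. by move=> Hf Hg c x y /=; rewrite Hf Hg. Qed.

Lemma klinear_sum (A U : lmodType k) I (r : seq I) (F : I -> A -> U) :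
  (forall i, klinear (F i)) -> klinear (fun x => \sum_(i <- r) F i x).
Proof.
move=> HF c x y; rewrite scaler_sumr -big_split /=.
by apply: eq_bigr => i _; rewrite HF.
Qed.

Lemma klinearZ (A U : lmodType k) (f : A -> U) (d : k) :
  klinear f -> klinear (fun x => d *: f x).
Proof. by move=> Hf c x y; rewrite Hf scalerDr !scalerA mulrC. Qed.

Lemma klinear_id (A : lmodType k) : klinear (fun x : A => x).
Proof. by []. Qed.

Lemma teq2_refl (A B : lmodType k) (s : seq (A * B)) : teq2 s s.
Proof. by []. Qed.
Lemma teq2_sym (A B : lmodType k) (s t : seq (A * B)) : teq2 s t -> teq2 t s.
Proof. by move=> H U phi Hp; rewrite H. Qed.
Lemma teq2_trans (A B : lmodType k) (s t u : seq (A * B)) :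
  teq2 s t -> teq2 t u -> teq2 s u.
Proof. by move=> H1 H2 U phi Hp; rewrite H1 // H2. Qed.
Lemma teq3_refl (A B C : lmodType k) (s : seq (A * B * C)) : teq3 s s.
Proof. by []. Qed.
Lemma teq3_sym (A B C : lmodType k) (s t : seq (A * B * C)) : teq3 s t -> teq3 t s.
Proof. by move=> H U phi Hp; rewrite H. Qed.
Lemma teq3_trans (A B C : lmodType k) (s t u : seq (A * B * C)) :
  teq3 s t -> teq3 t u -> teq3 s u.
Proof. by move=> H1 H2 U phi Hp; rewrite H1 // H2. Qed.

Lemma tlin_sum (V A B U : lmodType k) (f : V -> seq (A * B)) (phi : A -> B -> U) :
  tlinear f -> bilinear_map phi ->
  klinear (fun v => \sum_(p <- f v) phi p.1 p.2).
Proof.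
move=> Hf Hp c x y /=; rewrite Hf // big_cat /= big_map scaler_sumr.
congr (_ + _); apply: eq_bigr => p _ /=.
by case: Hp => H1 _; rewrite (klZ (H1 p.2)).
Qed.

Lemma bilinear_comp (A B A' B' U : lmodType k) (phi : A -> B -> U)
  (f : A' -> A) (g : B' -> B) :
  bilinear_map phi -> klinear f -> klinear g ->
  bilinear_map (fun a b => phi (f a) (g b)).
Proof.
move=> [H1 H2] Hf Hg; split=> [b|a] c x y /=.
- by rewrite Hf H1.
- by rewrite Hg H2.
Qed.

Lemma teq2_map (A B A' B' : lmodType k) (f : A -> A') (g : B -> B')
  (s t : seq (A * B)) : klinear f -> klinear g -> teq2 s t ->
  teq2 [seq (f p.1, g p.2) | p <- s] [seq (f p.1, g p.2) | p <- t].
Proof.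
move=> Hf Hg H U phi Hp; rewrite !big_map /=.
exact: (H _ (fun a b => phi (f a) (g b)) (bilinear_comp Hp Hf Hg)).
Qed.

End Gen.

Lemma sum_tscale (k : fieldType) (A B U : lmodType k) (F : A -> B -> U) c s :
  bilinear_map F ->
  \sum_(p <- tscale c s) F p.1 p.2 = c *: \sum_(p <- s) F p.1 p.2.
Proof.
move=> [H1 _]; rewrite big_map scaler_sumr; apply: eq_bigr => p _ /=.
exact: (klZ (H1 p.2)).
Qed.


Lemma teq2P (k : fieldType) (A B U : lmodType k) (s t : seq (A * B)) (F : A * B -> U) :
  teq2 s t -> bilinear_map (fun a b => F (a, b)) ->
  \sum_(p <- s) F p = \sum_(p <- t) F p.
Proof.
move=> E HF; have := E _ _ HF.
have G : forall r, \sum_(p <- r) F (p.1, p.2) = \sum_(p <- r) F p.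
  by move=> r; apply: eq_bigr => -[].
by rewrite /= !G.
Qed.

Lemma teq3P (k : fieldType) (A B C U : lmodType k) (s t : seq (A * B * C))
  (F : A * B * C -> U) :
  teq3 s t -> trilinear_map (fun a b c => F (a, b, c)) ->
  \sum_(p <- s) F p = \sum_(p <- t) F p.
Proof.
move=> E HF; have := E _ _ HF.
have G : forall r, \sum_(p <- r) F (p.1.1, p.1.2, p.2) = \sum_(p <- r) F p.
  by move=> r; apply: eq_bigr => -[[]].
by rewrite /= !G.
Qed.

Lemma sum_pairs (U : nmodType) I1 I2 J (f : I1 -> I2 -> J) (s : seq I1)
  (t : I1 -> seq I2) (F : J -> U) :
  \sum_(x <- flatten [seq [seq f a b | b <- t a] | a <- s]) F x =
  \sum_(a <- s) \sum_(b <- t a) F (f a b).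
Proof. by rewrite big_flatten /= big_map; apply: eq_bigr => a _; rewrite big_map. Qed.

Lemma sum_map (U : nmodType) I J (f : I -> J) (s : seq I) (F : J -> U) :
  \sum_(x <- [seq f a | a <- s]) F x = \sum_(a <- s) F (f a).
Proof. by rewrite big_map. Qed.

Section T3.
Variables (k : fieldType) (A B C : lmodType k).

Definition ev (U : lmodType k) (phi : A -> B -> C -> U) (s : seq (A * B * C)) : U :=
  \sum_(p <- s) phi p.1.1 p.1.2 p.2.

Definition sc3 (c : k) (s : seq (A * B * C)) : seq (A * B * C) :=
  [seq (c *: p.1.1, p.1.2, p.2) | p <- s].

Lemma ev_cat U phi s t : @ev U phi (s ++ t) = ev phi s + ev phi t.
Proof. by rewrite /ev big_cat. Qed.

Lemma ev_nil U phi : @ev U phi [::] = 0.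
Proof. by rewrite /ev big_nil. Qed.

Lemma ev_sc U phi c s : trilinear_map phi -> @ev U phi (sc3 c s) = c *: ev phi s.
Proof.
move=> [H1 _]; rewrite /ev big_map scaler_sumr; apply: eq_bigr => p _ /=.
exact: (klZ (H1 p.1.2 p.2)).
Qed.

Record T3 := MkT3 { t3P : seq (A * B * C) -> Prop;
                    t3Pex : exists s, t3P = teq3 s }.

Definition cls (s : seq (A * B * C)) : T3 := @MkT3 (teq3 s) (ex_intro _ s erefl).
Definition rep (x : T3) : seq (A * B * C) := projT1 (cid (t3Pex x)).

Lemma T3_eq (x y : T3) : t3P x = t3P y -> x = y.
Proof.
case: x => P Px; case: y => Q Qx /= E; subst Q.
by rewrite (Prop_irrelevance Px Qx).
Qed.

Lemma clsK x : cls (rep x) = x.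
Proof. by apply: T3_eq => /=; rewrite /rep; case: cid => s /= ->. Qed.

Lemma cls_eqP s t : cls s = cls t <-> teq3 s t.
Proof.
split=> [E|E].
- have : t3P (cls s) t by rewrite E /=; exact: teq3_refl.
  by [].
- apply: T3_eq => /=; apply: funext => u; apply: propext; split.
  + by move=> H; apply: teq3_trans (teq3_sym E) H.
  + by move=> H; apply: teq3_trans E H.
Qed.

Lemma rep_cls s : teq3 (rep (cls s)) s.
Proof. by apply/cls_eqP; rewrite clsK. Qed.

Lemma ev_rep_cls U phi s : trilinear_map phi -> @ev U phi (rep (cls s)) = ev phi s.
Proof. by move=> Hp; apply: rep_cls. Qed.

HB.instance Definition _ := gen_eqMixin T3.
HB.instance Definition _ := gen_choiceMixin T3.

Definition t3zero := cls [::].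
Definition t3add x y := cls (rep x ++ rep y).
Definition t3opp x := cls (sc3 (-1) (rep x)).
Definition t3scale c x := cls (sc3 c (rep x)).

Ltac evsimpl := rewrite /= ?ev_cat ?ev_nil ?ev_sc ?ev_rep_cls ?ev_cat ?ev_sc ?ev_nil //.

Lemma t3addA : associative t3add.
Proof.
move=> x y z; apply/cls_eqP => U phi Hp; rewrite -/(ev phi _) -/(ev phi _).
by evsimpl; rewrite addrA.
Qed.

Lemma t3addC : commutative t3add.
Proof.
move=> x y; apply/cls_eqP => U phi Hp; rewrite -/(ev phi _) -/(ev phi _).
by evsimpl; rewrite addrC.
Qed.

Lemma t3add0 : left_id t3zero t3add.
Proof.
move=> x; rewrite -[RHS]clsK; apply/cls_eqP => U phi Hp.
rewrite -/(ev phi _) -/(ev phi _); by evsimpl; rewrite add0r.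
Qed.

Lemma t3addN : left_inverse t3zero t3opp t3add.
Proof.
move=> x; apply/cls_eqP => U phi Hp; rewrite -/(ev phi _) -/(ev phi _).
by evsimpl; rewrite scaleN1r addNr.
Qed.

HB.instance Definition _ := GRing.isZmodule.Build T3 t3addA t3addC t3add0 t3addN.

Lemma t3scaleA a b v : t3scale a (t3scale b v) = t3scale (a * b) v.
Proof.
apply/cls_eqP => U phi Hp; rewrite -/(ev phi _) -/(ev phi _).
by evsimpl; rewrite scalerA.
Qed.

Lemma t3scale1 : left_id 1 t3scale.
Proof.
move=> x; rewrite -[RHS]clsK; apply/cls_eqP => U phi Hp.
rewrite -/(ev phi _) -/(ev phi _); by evsimpl; rewrite scale1r.
Qed.

Lemma t3scaleDr : right_distributive t3scale +%R.
Proof.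
move=> c x y; apply/cls_eqP => U phi Hp; rewrite -/(ev phi _) -/(ev phi _).
by evsimpl; rewrite scalerDr.
Qed.

Lemma t3scaleDl v : {morph t3scale^~ v: a b / a + b}.
Proof.
move=> a b; apply/cls_eqP => U phi Hp; rewrite -/(ev phi _) -/(ev phi _).
by evsimpl; rewrite scalerDl.
Qed.

HB.instance Definition _ := GRing.Zmodule_isLmodule.Build k T3
  t3scaleA t3scale1 t3scaleDr t3scaleDl.

Definition t3 a b c : T3 := cls [:: (a, b, c)].

Definition lift (U : lmodType k) (phi : A -> B -> C -> U) (x : T3) : U :=
  ev phi (rep x).

Lemma lift_cls U phi s : trilinear_map phi -> @lift U phi (cls s) = ev phi s.
Proof. exact: ev_rep_cls. Qed.

Lemma lift_t3 U phi a b c : trilinear_map phi -> @lift U phi (t3 a b c) = phi a b c.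
Proof. by move=> Hp; rewrite lift_cls // /ev big_seq1. Qed.

Lemma lift_lin U phi : trilinear_map phi -> klinear (@lift U phi).
Proof.
move=> Hp c x y.
rewrite /lift -[c *: x + y]/(cls (rep (cls (sc3 c (rep x))) ++ rep y)).
by rewrite ev_rep_cls // ev_cat ev_rep_cls // ev_sc.
Qed.

Lemma cls_sum s : cls s = \sum_(p <- s) t3 p.1.1 p.1.2 p.2.
Proof.
elim: s => [|p s IH]; first by rewrite big_nil.
rewrite big_cons -IH; apply/cls_eqP => U phi Hp.
rewrite -/(ev phi _) -/(ev phi _) /= ev_cat !ev_rep_cls //.
by rewrite /ev big_cons big_seq1.
Qed.

Lemma t3_sum x : x = \sum_(p <- rep x) t3 p.1.1 p.1.2 p.2.
Proof. by rewrite -cls_sum clsK. Qed.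

Lemma t3_ext (U : lmodType k) (f g : T3 -> U) : klinear f -> klinear g ->
  (forall a b c, f (t3 a b c) = g (t3 a b c)) -> forall x, f x = g x.
Proof.
move=> Hf Hg E x; rewrite (t3_sum x) !kl_sum //.
by apply: eq_bigr => p _; rewrite E.
Qed.

Lemma lift_ext (x y : T3) :
  (forall (U : lmodType k) phi, trilinear_map phi -> @lift U phi x = lift phi y) ->
  x = y.
Proof.
move=> E; rewrite -(clsK x) -(clsK y); apply/cls_eqP => U phi Hp; exact: E.
Qed.

Lemma lift_t3id x : lift t3 x = x.
Proof. by rewrite /lift /ev -cls_sum clsK. Qed.

Lemma t3_tri : trilinear_map t3.
Proof.
split; [|split] => ? ? c x y; rewrite /t3; apply/cls_eqP => U phi Hp;
  rewrite -/(ev phi _) -/(ev phi _) /= ev_cat !ev_rep_cls // ?ev_sc // ?ev_rep_cls //;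
  rewrite /ev !big_cons !big_nil /= !addr0; case: Hp => [H1 [H2 H3]].

- by rewrite H1.
- by rewrite H2.
- by rewrite H3.
Qed.

Lemma lift_phi_sum (U : lmodType k) I (r : seq I) (F : I -> A -> B -> C -> U) x :
  lift (fun a b c => \sum_(i <- r) F i a b c) x = \sum_(i <- r) lift (F i) x.
Proof. by rewrite /lift /ev exchange_big. Qed.

Lemma lift_phiZ (U : lmodType k) (d : k) (phi : A -> B -> C -> U) x :
  lift (fun a b c => d *: phi a b c) x = d *: lift phi x.
Proof. by rewrite /lift /ev scaler_sumr. Qed.

Lemma lift_phiD (U : lmodType k) (phi psi : A -> B -> C -> U) x :
  lift (fun a b c => phi a b c + psi a b c) x = lift phi x + lift psi x.
Proof. by rewrite /lift /ev big_split. Qed.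

Lemma lift_eq (U : lmodType k) (phi psi : A -> B -> C -> U) x :
  (forall a b c, phi a b c = psi a b c) -> lift phi x = lift psi x.
Proof. by move=> E; rewrite /lift /ev; apply: eq_bigr => p _; rewrite E. Qed.

End T3.

Lemma lift_comp (k : fieldType) (A B C A' B' C' U : lmodType k)
  (psi : A' -> B' -> C' -> U) (phi : A -> B -> C -> T3 A' B' C') x :
  trilinear_map psi ->
  lift psi (lift phi x) = lift (fun a b c => lift psi (phi a b c)) x.
Proof.
move=> Hp; have -> : lift phi x = \sum_(p <- rep x) phi p.1.1 p.1.2 p.2 by [].
by rewrite (kl_sum _ _ (lift_lin Hp)).
Qed.

Lemma lift_sum (k : fieldType) (A B C U : lmodType k) (phi : A -> B -> C -> U)
  I (r : seq I) (F : I -> T3 A B C) :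
  trilinear_map phi -> lift phi (\sum_(i <- r) F i) = \sum_(i <- r) lift phi (F i).
Proof. by move=> Hp; rewrite (kl_sum _ _ (lift_lin Hp)). Qed.

Lemma bi2_sum (k : fieldType) (A B U : lmodType k) (F : A -> B -> U) x
  I (r : seq I) (G : I -> B) :
  bilinear_map F -> F x (\sum_(i <- r) G i) = \sum_(i <- r) F x (G i).
Proof. by move=> [_ H2]; rewrite (kl_sum _ _ (H2 x)). Qed.

Lemma bi1_sum (k : fieldType) (A B U : lmodType k) (F : A -> B -> U) y
  I (r : seq I) (G : I -> A) :
  bilinear_map F -> F (\sum_(i <- r) G i) y = \sum_(i <- r) F (G i) y.
Proof. by move=> [H1 _]; rewrite (kl_sum _ _ (H1 y)). Qed.

Lemma lift_sum2 (k : fieldType) (A B C U : lmodType k) (phi : A -> B -> C -> U)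
  I J (r : seq I) (s : I -> seq J) (f : I -> J -> A) (g : I -> J -> B) (h : I -> J -> C) :
  trilinear_map phi ->
  lift phi (\sum_(i <- r) \sum_(j <- s i) t3 (f i j) (g i j) (h i j)) =
  \sum_(i <- r) \sum_(j <- s i) phi (f i j) (g i j) (h i j).
Proof.
move=> Hp; rewrite lift_sum //; apply: eq_bigr => i _.
by rewrite lift_sum //; apply: eq_bigr => j _; rewrite lift_t3.
Qed.

Lemma t3Z2 (k : fieldType) (A B C : lmodType k) (a : A) (c : k) (b : B) (d : C) :
  t3 a (c *: b) d = c *: t3 a b d.
Proof. by case: (t3_tri A B C) => _ [H2 _]; rewrite (klZ (H2 a d)). Qed.

Section Wsp.
Variables (k : fieldType) (H : algType k) (V : lmodType k).

Record Wt := MkW { wf : H -> H -> V; wfP : bilinear_map wf }.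

Lemma W_eq (f g : Wt) : wf f = wf g -> f = g.
Proof.
case: f => f fP; case: g => g gP /= E; subst g.
by rewrite (Prop_irrelevance fP gP).
Qed.

HB.instance Definition _ := gen_eqMixin Wt.
HB.instance Definition _ := gen_choiceMixin Wt.

Lemma bil0 : bilinear_map (fun (_ _ : H) => (0 : V)).
Proof. by split=> ? c x y; rewrite scaler0 addr0. Qed.

Lemma bilD (f g : H -> H -> V) : bilinear_map f -> bilinear_map g ->
  bilinear_map (fun a b => f a b + g a b).
Proof.
move=> [F1 F2] [G1 G2]; split=> [b|a] c x y /=.
- by rewrite (F1 b) (G1 b) scalerDr addrACA.
- by rewrite (F2 a) (G2 a) scalerDr addrACA.
Qed.

Lemma bilZ (d : k) (f : H -> H -> V) : bilinear_map f ->
  bilinear_map (fun a b => d *: f a b).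
Proof.
move=> [F1 F2]; split=> [b|a] c x y /=.
- by rewrite (F1 b) scalerDr !scalerA mulrC.
- by rewrite (F2 a) scalerDr !scalerA mulrC.
Qed.

Definition wzero := MkW bil0.
Definition wadd f g := MkW (bilD (wfP f) (wfP g)).
Definition wscale d f := MkW (bilZ d (wfP f)).
Definition wopp f := wscale (-1) f.

Lemma waddA : associative wadd.
Proof. by move=> f g h; apply: W_eq; apply: funext => a; apply: funext => b /=; rewrite addrA. Qed.
Lemma waddC : commutative wadd.
Proof. by move=> f g; apply: W_eq; apply: funext => a; apply: funext => b /=; rewrite addrC. Qed.
Lemma wadd0 : left_id wzero wadd.
Proof. by move=> f; apply: W_eq; apply: funext => a; apply: funext => b /=; rewrite add0r. Qed.
Lemma waddN : left_inverse wzero wopp wadd.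
Proof. by move=> f; apply: W_eq; apply: funext => a; apply: funext => b /=; rewrite scaleN1r addNr. Qed.

HB.instance Definition _ := GRing.isZmodule.Build Wt waddA waddC wadd0 waddN.

Lemma wscaleA a b v : wscale a (wscale b v) = wscale (a * b) v.
Proof. by apply: W_eq; apply: funext => x; apply: funext => y /=; rewrite scalerA. Qed.
Lemma wscale1 : left_id 1 wscale.
Proof. by move=> f; apply: W_eq; apply: funext => x; apply: funext => y /=; rewrite scale1r. Qed.
Lemma wscaleDr : right_distributive wscale +%R.
Proof. by move=> c f g; apply: W_eq; apply: funext => x; apply: funext => y /=; rewrite scalerDr. Qed.
Lemma wscaleDl v : {morph wscale^~ v: a b / a + b}.
Proof. by move=> a b; apply: W_eq; apply: funext => x; apply: funext => y /=; rewrite scalerDl. Qed.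

HB.instance Definition _ := GRing.Zmodule_isLmodule.Build k Wt
  wscaleA wscale1 wscaleDr wscaleDl.

Lemma wf_add (f g : Wt) a b : wf (f + g) a b = wf f a b + wf g a b.
Proof. by []. Qed.
Lemma wf_scale c (f : Wt) a b : wf (c *: f) a b = c *: wf f a b.
Proof. by []. Qed.

Lemma wf_lin a b : klinear (fun f : Wt => wf f a b).
Proof. by []. Qed.

Lemma bil_wl (a : H) (f : H -> H -> V) : bilinear_map f ->
  bilinear_map (fun x y => f (x * a) y).
Proof.
move=> [F1 F2]; split=> [b|x] c u v /=.
- by rewrite mulrDl -scalerAl (F1 b).
- by rewrite (F2 (x * a)).
Qed.

Lemma bil_wr (a : H) (f : H -> H -> V) : bilinear_map f ->
  bilinear_map (fun x y => f x (a * y)).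
Proof.
move=> [F1 F2]; split=> [b|x] c u v /=.
- by rewrite (F1 (a * b)).
- by rewrite mulrDr -scalerAr (F2 x).
Qed.

Definition wl (a : H) (f : Wt) : Wt := MkW (bil_wl a (wfP f)).
Definition wr (f : Wt) (a : H) : Wt := MkW (bil_wr a (wfP f)).

Lemma wl_linl f : klinear (fun a => wl a f).
Proof.
move=> c x y; apply: W_eq; apply: funext => u; apply: funext => v /=.
by case: (wfP f) => F1 _; rewrite mulrDr -scalerAr (F1 v).
Qed.
Lemma wl_linr a : klinear (wl a).
Proof. by move=> c x y; apply: W_eq. Qed.
Lemma wr_linl a : klinear (fun f => wr f a).
Proof. by move=> c x y; apply: W_eq. Qed.
Lemma wr_linr f : klinear (wr f).
Proof.
move=> c x y; apply: W_eq; apply: funext => u; apply: funext => v /=.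
by case: (wfP f) => _ F2; rewrite mulrDl -scalerAl (F2 u).
Qed.
Lemma wl_mul a b f : wl (a * b) f = wl a (wl b f).
Proof. by apply: W_eq; apply: funext => u; apply: funext => v /=; rewrite mulrA. Qed.
Lemma wl_one f : wl 1 f = f.
Proof. by apply: W_eq; apply: funext => u; apply: funext => v /=; rewrite mulr1. Qed.
Lemma wr_mul f a b : wr f (a * b) = wr (wr f a) b.
Proof. by apply: W_eq; apply: funext => u; apply: funext => v /=; rewrite mulrA. Qed.
Lemma wr_one f : wr f 1 = f.
Proof. by apply: W_eq; apply: funext => u; apply: funext => v /=; rewrite mul1r. Qed.
Lemma wlr a b f : wr (wl a f) b = wl a (wr f b).
Proof. by apply: W_eq. Qed.

End Wsp.

Section Lin.
Variable k : fieldType.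

Lemma kl_idf (A : lmodType k) : klinear (fun x : A => x).
Proof. by []. Qed.

Lemma kl_sumf (A U : lmodType k) I (r : seq I) (F : I -> A -> U) :
  (forall i, klinear (fun x => F i x)) -> klinear (fun x => \sum_(i <- r) F i x).
Proof. exact: klinear_sum. Qed.

Lemma kl_tlinf (X V A B U : lmodType k) (g : V -> seq (A * B)) (F : A * B -> U)
   (f : X -> V) :
  tlinear g -> bilinear_map (fun a b => F (a, b)) -> klinear f ->
  klinear (fun x => \sum_(q <- g (f x)) F q).
Proof.
move=> Hg HF Hf c x y; rewrite Hf.
have := tlin_sum Hg HF c (f x) (f y).
have E : forall s, \sum_(q <- s) F (q.1, q.2) = \sum_(q <- s) F q.
  by move=> s; apply: eq_bigr => -[].
by rewrite /= !E.
Qed.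

Lemma kl_bi1 (X A B U : lmodType k) (phi : A -> B -> U) (f : X -> A) b :
  bilinear_map phi -> klinear f -> klinear (fun x => phi (f x) b).
Proof. by move=> [H1 _] Hf c x y; rewrite Hf H1. Qed.
Lemma kl_bi2 (X A B U : lmodType k) (phi : A -> B -> U) (f : X -> B) a :
  bilinear_map phi -> klinear f -> klinear (fun x => phi a (f x)).
Proof. by move=> [_ H2] Hf c x y; rewrite Hf H2. Qed.
Lemma kl_tri1 (X A B C U : lmodType k) (phi : A -> B -> C -> U) (f : X -> A) b c :
  trilinear_map phi -> klinear f -> klinear (fun x => phi (f x) b c).
Proof. by move=> [H1 _] Hf d x y; rewrite Hf H1. Qed.
Lemma kl_tri2 (X A B C U : lmodType k) (phi : A -> B -> C -> U) (f : X -> B) a c :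
  trilinear_map phi -> klinear f -> klinear (fun x => phi a (f x) c).
Proof. by move=> [_ [H2 _]] Hf d x y; rewrite Hf H2. Qed.
Lemma kl_tri3 (X A B C U : lmodType k) (phi : A -> B -> C -> U) (f : X -> C) a b :
  trilinear_map phi -> klinear f -> klinear (fun x => phi a b (f x)).
Proof. by move=> [_ [_ H3]] Hf d x y; rewrite Hf H3. Qed.

Lemma kl_t31 (X A B C : lmodType k) (f : X -> A) (b : B) (c : C) :
  klinear f -> klinear (fun x => t3 (f x) b c).
Proof. by move=> Hf; apply: kl_tri1 Hf; apply: t3_tri. Qed.
Lemma kl_t32 (X A B C : lmodType k) (f : X -> B) (a : A) (c : C) :
  klinear f -> klinear (fun x => t3 a (f x) c).
Proof. by move=> Hf; apply: kl_tri2 Hf; apply: t3_tri. Qed.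
Lemma kl_t33 (X A B C : lmodType k) (f : X -> C) (a : A) (b : B) :
  klinear f -> klinear (fun x => t3 a b (f x)).
Proof. by move=> Hf; apply: kl_tri3 Hf; apply: t3_tri. Qed.

Lemma kl_lift (X A B C U : lmodType k) (phi : A -> B -> C -> U) (f : X -> T3 A B C) :
  trilinear_map phi -> klinear f -> klinear (fun x => lift phi (f x)).
Proof. by move=> Hp Hf c x y; rewrite Hf lift_lin. Qed.

Lemma kl_scalef (X U : lmodType k) (f : X -> U) (d : k) :
  klinear f -> klinear (fun x => d *: f x).
Proof. exact: klinearZ. Qed.

Lemma kl_mulr (H : algType k) (X : lmodType k) (f : X -> H) (a : H) :
  klinear f -> klinear (fun x => f x * a).
Proof. by move=> Hf c x y; rewrite Hf mulrDl scalerAl. Qed.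
Lemma kl_mull (H : algType k) (X : lmodType k) (f : X -> H) (a : H) :
  klinear f -> klinear (fun x => a * f x).
Proof. by move=> Hf c x y; rewrite Hf mulrDr scalerAr. Qed.

Lemma kl_wl1 (H : algType k) (V X : lmodType k) (f : X -> H) (w : Wt H V) :
  klinear f -> klinear (fun x => wl (f x) w).
Proof. by move=> Hf c x y; rewrite Hf wl_linl. Qed.
Lemma kl_wl2 (H : algType k) (V X : lmodType k) (f : X -> Wt H V) (a : H) :
  klinear f -> klinear (fun x => wl a (f x)).
Proof. by move=> Hf c x y; rewrite Hf wl_linr. Qed.
Lemma kl_wr1 (H : algType k) (V X : lmodType k) (f : X -> Wt H V) (a : H) :
  klinear f -> klinear (fun x => wr (f x) a).
Proof. by move=> Hf c x y; rewrite Hf wr_linl. Qed.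
Lemma kl_wr2 (H : algType k) (V X : lmodType k) (f : X -> H) (w : Wt H V) :
  klinear f -> klinear (fun x => wr w (f x)).
Proof. by move=> Hf c x y; rewrite Hf wr_linr. Qed.

Lemma kl_wf (H : algType k) (V X : lmodType k) (f : X -> Wt H V) (a b : H) :
  klinear f -> klinear (fun x => wf (f x) a b).
Proof. by move=> Hf c x y; rewrite Hf. Qed.

End Lin.

Section Sweedler.
Variables (k : fieldType) (H : algType k) (HA : hopf_algebra H).
Local Notation D := (comul HA).
Local Notation eps := (counit HA).

Lemma kl_eps (X U : lmodType k) (f : X -> H) (v : U) :
  klinear f -> klinear (fun x => eps (f x) *: v).
Proof. by move=> Hf c x y; rewrite Hf counit_lin scalerDl scalerA. Qed.

Lemma kl_eps2 (X U : lmodType k) (f : X -> H) (v : U) (d : k) :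
  klinear f -> klinear (fun x => (eps (f x) * d) *: v).
Proof. by move=> Hf c x y; rewrite Hf counit_lin mulrDl scalerDl -mulrA scalerA. Qed.

Lemma kl_eps3 (X U : lmodType k) (f : X -> H) (v : U) (d : k) :
  klinear f -> klinear (fun x => (d * eps (f x)) *: v).
Proof. by move=> Hf c x y; rewrite Hf counit_lin mulrDr scalerDl mulrCA scalerA. Qed.

Lemma kl_Df (X U : lmodType k) (F : H * H -> U) (f : X -> H) :
  bilinear_map (fun a b => F (a, b)) -> klinear f ->
  klinear (fun x => \sum_(q <- D (f x)) F q).
Proof. by move=> HF Hf; apply: kl_tlinf HF Hf; apply: comul_lin. Qed.

Lemma kl_lact1 (M : hopf_bimodule HA) (X : lmodType k) (f : X -> H) (m : hb_sort M) :
  klinear f -> klinear (fun x => lact (f x) m).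
Proof. by move=> Hf c x y; rewrite Hf lact_linl. Qed.
Lemma kl_lact2 (M : hopf_bimodule HA) (X : lmodType k) (f : X -> hb_sort M) (h : H) :
  klinear f -> klinear (fun x => lact h (f x)).
Proof. by move=> Hf c x y; rewrite Hf lact_linr. Qed.
Lemma kl_ract1 (M : hopf_bimodule HA) (X : lmodType k) (f : X -> hb_sort M) (h : H) :
  klinear f -> klinear (fun x => ract (f x) h).
Proof. by move=> Hf c x y; rewrite Hf ract_linl. Qed.
Lemma kl_ract2 (M : hopf_bimodule HA) (X : lmodType k) (f : X -> H) (m : hb_sort M) :
  klinear f -> klinear (fun x => ract m (f x)).
Proof. by move=> Hf c x y; rewrite Hf ract_linr. Qed.

End Sweedler.

Create HintDb tlin.
Create HintDb klin.

Lemma kl_appf (k : fieldType) (X A U : lmodType k) (g : A -> U) (f : X -> A) :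
  klinear g -> klinear f -> klinear (fun x => g (f x)).
Proof. by move=> Hg Hf c x y; rewrite Hf Hg. Qed.

#[export] Hint Resolve comul_lin lcoact_lin rcoact_lin : tlin.

Ltac lin := repeat match goal with
 | |- bilinear_map _ => split => ? /=
 | |- trilinear_map _ => split; [|split] => ? ? /=
 | |- klinear _ => first
    [ exact: kl_idf
    | solve [ eauto with klin ]
    | apply: kl_sumf => ? /=
    | apply: kl_Df; [| ]
    | apply: kl_tlinf; [ solve [eauto with tlin] | | ]
    | apply: kl_t31 | apply: kl_t32 | apply: kl_t33
    | apply: kl_lift
    | apply: kl_mulr | apply: kl_mull
    | apply: kl_wf | apply: kl_wl1 | apply: kl_wl2 | apply: kl_wr1 | apply: kl_wr2
    | apply: kl_eps | apply: kl_eps2 | apply: kl_eps3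
    | apply: kl_scalef
    | apply: kl_bi1; [ solve [ assumption ] | ]
    | apply: kl_bi2; [ solve [ assumption ] | ]
    | apply: kl_tri1; [ solve [ assumption ] | ]
    | apply: kl_tri2; [ solve [ assumption ] | ]
    | apply: kl_tri3; [ solve [ assumption ] | ]
    | apply: kl_lact1 | apply: kl_lact2 | apply: kl_ract1 | apply: kl_ract2
    | apply: kl_appf; [ solve [ eauto with klin ] | ] ]
 end.

Section Sweedler2.
Variables (k : fieldType) (H : algType k) (HA : hopf_algebra H).
Local Notation D := (comul HA).
Local Notation eps := (counit HA).

Lemma D_mul (U : lmodType k) (F : H -> H -> U) a b : bilinear_map F ->
  \sum_(q <- D (a * b)) F q.1 q.2 =
  \sum_(p <- D a) \sum_(q <- D b) F (p.1 * q.1) (p.2 * q.2).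
Proof.
move=> HF; rewrite (comul_mul HA a b HF) big_allpairs_dep /=.
by [].
Qed.

Lemma D_one (U : lmodType k) (F : H -> H -> U) : bilinear_map F ->
  \sum_(q <- D 1) F q.1 q.2 = F 1 1.
Proof. by move=> HF; rewrite (comul_one HA HF) big_seq1. Qed.

Lemma D_coass (U : lmodType k) (F : H -> H -> H -> U) h : trilinear_map F ->
  \sum_(p <- D h) \sum_(q <- D p.1) F q.1 q.2 p.2 =
  \sum_(p <- D h) \sum_(q <- D p.2) F p.1 q.1 q.2.
Proof.
move=> HF; have := comul_coassoc HA h HF.
by rewrite !big_allpairs_dep /=.
Qed.

Lemma D_epsl (U : lmodType k) (G : H -> U) h : klinear G ->
  \sum_(p <- D h) eps p.1 *: G p.2 = G h.
Proof.
move=> HG; rewrite -{2}(counit_l HA h) kl_sum //.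
by apply: eq_bigr => p _; rewrite klZ.
Qed.

Lemma D_epsr (U : lmodType k) (G : H -> U) h : klinear G ->
  \sum_(p <- D h) eps p.2 *: G p.1 = G h.
Proof.
move=> HG; rewrite -{2}(counit_r HA h) kl_sum //.
by apply: eq_bigr => p _; rewrite klZ.
Qed.

End Sweedler2.

Section Sweedler3.
Variables (k : fieldType) (H : algType k) (HA : hopf_algebra H).
Local Notation D := (comul HA).
Local Notation eps := (counit HA).

Lemma D_mulP (U : lmodType k) (F : H * H -> U) a b :
  bilinear_map (fun x y => F (x, y)) ->
  \sum_(q <- D (a * b)) F q =
  \sum_(p <- D a) \sum_(q <- D b) F (p.1 * q.1, p.2 * q.2).
Proof.
move=> HF; rewrite -(D_mul HA a b HF); apply: eq_bigr => -[] //.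
Qed.

Lemma D_oneP (U : lmodType k) (F : H * H -> U) :
  bilinear_map (fun x y => F (x, y)) -> \sum_(q <- D 1) F q = F (1, 1).
Proof.
move=> HF; rewrite -(D_one HA HF); apply: eq_bigr => -[] //.
Qed.

Lemma D_linP (U : lmodType k) (F : H * H -> U) c a b :
  bilinear_map (fun x y => F (x, y)) ->
  \sum_(q <- D (c *: a + b)) F q = c *: \sum_(q <- D a) F q + \sum_(q <- D b) F q.
Proof. by move=> HF; have L := kl_Df HA HF (@kl_idf k H); exact: (L c a b). Qed.

End Sweedler3.

Section Sweedler4.
Variables (k : fieldType) (H : algType k) (HA : hopf_algebra H).
Local Notation D := (comul HA).

Lemma D_coass4 (U : lmodType k) (K : H -> H -> H -> H -> U) h :
  trilinear_map (fun x y z => \sum_(v <- D y) K x v.1 v.2 z) ->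
  (forall x, trilinear_map (K x)) ->
  \sum_(q <- D h) \sum_(u <- D q.1) \sum_(v <- D u.2) K u.1 v.1 v.2 q.2 =
  \sum_(q <- D h) \sum_(u <- D q.2) \sum_(v <- D u.2) K q.1 u.1 v.1 v.2.
Proof.
move=> H1 H2.
rewrite (D_coass HA (F := fun x y z => \sum_(v <- D y) K x v.1 v.2 z)) //.
apply: eq_bigr => q _.
exact: (D_coass HA (F := fun x y z => K q.1 x y z)).
Qed.

End Sweedler4.

Section J.
Variables (k : fieldType) (H : algType k) (HA : hopf_algebra H) (V : lmodType k).
Local Notation D := (comul HA).
Local Notation eps := (counit HA).
Local Notation W := (Wt H V).
Local Notation J := (T3 H W H).

Definition phiL (a : H) (h : H) (w : W) (h' : H) : J :=
  \sum_(q <- D a) \sum_(r <- D q.2) t3 (q.1 * h) (wl r.1 w) (r.2 * h').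
Definition phiR (b : H) (h : H) (w : W) (h' : H) : J :=
  \sum_(q <- D b) \sum_(r <- D q.2) t3 (h * q.1) (wr w r.1) (h' * r.2).

Definition Jl (a : H) (x : J) : J := lift (phiL a) x.
Definition Jr (x : J) (b : H) : J := lift (phiR b) x.
Definition Jlco (x : J) : seq (H * J) :=
  [seq (q.1, t3 q.2 p.1.2 p.2) | p <- rep x, q <- D p.1.1].
Definition Jrco (x : J) : seq (J * H) :=
  [seq (t3 p.1.1 p.1.2 q.1, q.2) | p <- rep x, q <- D p.2].

Lemma phiL_tri a : trilinear_map (phiL a).
Proof. rewrite /phiL; lin. Qed.
Lemma phiR_tri b : trilinear_map (phiR b).
Proof. rewrite /phiR; lin. Qed.

End J.

Section J2.
Variables (k : fieldType) (H : algType k) (HA : hopf_algebra H) (V : lmodType k).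
Local Notation D := (comul HA).
Local Notation eps := (counit HA).
Local Notation W := (Wt H V).
Local Notation J := (T3 H W H).
Local Notation Jl := (@Jl _ _ HA V).
Local Notation Jr := (@Jr _ _ HA V).
Local Notation phiL := (@phiL _ _ HA V).
Local Notation phiR := (@phiR _ _ HA V).

Lemma Jl_lin a : klinear (Jl a).
Proof. exact: lift_lin (phiL_tri HA V a). Qed.
Lemma Jr_lin b : klinear (fun x : J => Jr x b).
Proof. exact: lift_lin (phiR_tri HA V b). Qed.

Lemma Jl_t3 a h w h' : Jl a (t3 h w h') = phiL a h w h'.
Proof. by rewrite /Jl lift_t3 //; apply: phiL_tri. Qed.
Lemma Jr_t3 b h w h' : Jr (t3 h w h') b = phiR b h w h'.
Proof. by rewrite /Jr lift_t3 //; apply: phiR_tri. Qed.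

Lemma Jl_linl (m : J) : klinear (fun a => Jl a m).
Proof.
move=> c a a'; rewrite /Jl -lift_phiZ -lift_phiD; apply: lift_eq => h w h'.
rewrite /phiL D_linP //; lin.
Qed.

Lemma Jr_linr (m : J) : klinear (fun b => Jr m b).
Proof.
move=> c a a'; rewrite /Jr -lift_phiZ -lift_phiD; apply: lift_eq => h w h'.
rewrite /phiR D_linP //; lin.
Qed.

Lemma Jl_mul a b m : Jl (a * b) m = Jl a (Jl b m).
Proof.
apply: (t3_ext (f := Jl (a * b)) (g := fun m => Jl a (Jl b m))).
- exact: Jl_lin.
- exact: (klinear_comp (Jl_lin b) (Jl_lin a)).
move=> h w h'; rewrite !Jl_t3 /phiL kl_sum; last exact: Jl_lin.
rewrite D_mulP /=; last by lin.
under eq_bigr => p _ do under eq_bigr => q _ do (rewrite D_mulP /=; last by lin).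
under [RHS]eq_bigr => q _ do (rewrite kl_sum; last exact: Jl_lin).
under [RHS]eq_bigr => q _ do under eq_bigr => r _ do rewrite Jl_t3 /phiL.
under eq_bigr => p _ do under eq_bigr => q _ do rewrite exchange_big.
rewrite exchange_big; under eq_bigr => q _ do rewrite exchange_big.
apply: eq_bigr => q _; apply: eq_bigr => r _; apply: eq_bigr => p _.
by apply: eq_bigr => s _; rewrite !mulrA wl_mul.
Qed.

Lemma Jl_one m : Jl 1 m = m.
Proof.
apply: (t3_ext (f := Jl 1) (g := id)); [exact: Jl_lin | by [] |].
move=> h w h'; rewrite Jl_t3 /phiL D_oneP /=; last by lin.
by rewrite D_oneP /=; [rewrite !mul1r wl_one | lin].
Qed.

Lemma Jr_one m : Jr m 1 = m.
Proof.
apply: (t3_ext (f := fun m => Jr m 1) (g := id)); [exact: Jr_lin | by [] |].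
move=> h w h'; rewrite Jr_t3 /phiR D_oneP /=; last by lin.
by rewrite D_oneP /=; [rewrite !mulr1 wr_one | lin].
Qed.

Lemma Jr_mul m a b : Jr m (a * b) = Jr (Jr m a) b.
Proof.
apply: (t3_ext (f := fun m => Jr m (a * b)) (g := fun m => Jr (Jr m a) b)).
- exact: Jr_lin.
- exact: (klinear_comp (Jr_lin a) (Jr_lin b)).
move=> h w h'; rewrite !Jr_t3 /phiR (kl_sum (f := fun x => Jr x b)); last exact: Jr_lin.
rewrite D_mulP /=; last by lin.
under eq_bigr => p _ do under eq_bigr => q _ do (rewrite D_mulP /=; last by lin).
under [RHS]eq_bigr => q _ do (rewrite (kl_sum (f := fun x => Jr x b)); last exact: Jr_lin).
under [RHS]eq_bigr => q _ do under eq_bigr => r _ do rewrite Jr_t3 /phiR.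
under eq_bigr => p _ do rewrite exchange_big.
apply: eq_bigr => p _; apply: eq_bigr => r _; apply: eq_bigr => q _.
by apply: eq_bigr => s _; rewrite !mulrA wr_mul.
Qed.

Lemma Jlr a b m : Jr (Jl a m) b = Jl a (Jr m b).
Proof.
apply: (t3_ext (f := fun m => Jr (Jl a m) b) (g := fun m => Jl a (Jr m b))).
- exact: (klinear_comp (Jl_lin a) (Jr_lin b)).
- exact: (klinear_comp (Jr_lin b) (Jl_lin a)).
move=> h w h'; rewrite Jl_t3 Jr_t3 /phiL /phiR (kl_sum (f := fun x => Jr x b)); last exact: Jr_lin.
rewrite (kl_sum _ _ (Jl_lin a)).
under eq_bigr => q _ do (rewrite (kl_sum (f := fun x => Jr x b)); last exact: Jr_lin).
under [RHS]eq_bigr => q _ do (rewrite kl_sum; last exact: Jl_lin).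
under eq_bigr => q _ do under eq_bigr => r _ do rewrite Jr_t3 /phiR.
under [RHS]eq_bigr => q _ do under eq_bigr => r _ do rewrite Jl_t3 /phiL.
under eq_bigr => q _ do rewrite exchange_big.
under eq_bigr => q _ do under eq_bigr => q' _ do rewrite exchange_big.
rewrite exchange_big; under eq_bigr => q' _ do rewrite exchange_big.
apply: eq_bigr => q' _; apply: eq_bigr => r' _; apply: eq_bigr => q _.
by apply: eq_bigr => r _; rewrite !mulrA wlr.
Qed.

End J2.

Section J3.
Variables (k : fieldType) (H : algType k) (HA : hopf_algebra H) (V : lmodType k).
Local Notation D := (comul HA).
Local Notation eps := (counit HA).
Local Notation W := (Wt H V).
Local Notation J := (T3 H W H).
Local Notation Jl := (@Jl _ _ HA V).
Local Notation Jr := (@Jr _ _ HA V).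
Local Notation Jlco := (@Jlco _ _ HA V).
Local Notation Jrco := (@Jrco _ _ HA V).

Lemma JlcoE (U : lmodType k) (F : H -> J -> U) x :
  \sum_(p <- Jlco x) F p.1 p.2 = lift (fun h w h' => \sum_(q <- D h) F q.1 (t3 q.2 w h')) x.
Proof. by rewrite /Jlco big_allpairs_dep. Qed.

Lemma JrcoE (U : lmodType k) (F : J -> H -> U) x :
  \sum_(p <- Jrco x) F p.1 p.2 = lift (fun h w h' => \sum_(q <- D h') F (t3 h w q.1) q.2) x.
Proof. by rewrite /Jrco big_allpairs_dep. Qed.

Lemma JlcoP (U : lmodType k) (F : H * J -> U) x :
  \sum_(p <- Jlco x) F p = lift (fun h w h' => \sum_(q <- D h) F (q.1, t3 q.2 w h')) x.
Proof. by rewrite -(JlcoE (fun a b => F (a, b))); apply: eq_bigr => -[]. Qed.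

Lemma JrcoP (U : lmodType k) (F : J * H -> U) x :
  \sum_(p <- Jrco x) F p = lift (fun h w h' => \sum_(q <- D h') F (t3 h w q.1, q.2)) x.
Proof. by rewrite -(JrcoE (fun a b => F (a, b))); apply: eq_bigr => -[]. Qed.

Lemma Jlco_lin : tlinear Jlco.
Proof.
move=> c x y U F HF; rewrite big_cat sum_tscale // !JlcoE lift_lin //; lin.
Qed.

Lemma Jrco_lin : tlinear Jrco.
Proof.
move=> c x y U F HF; rewrite big_cat sum_tscale // !JrcoE lift_lin //; lin.
Qed.

Hint Resolve Jlco_lin Jrco_lin : tlin.

Lemma Jlco_t3 (U : lmodType k) (F : H -> J -> U) h w h' : bilinear_map F ->
  \sum_(p <- Jlco (t3 h w h')) F p.1 p.2 = \sum_(q <- D h) F q.1 (t3 q.2 w h').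
Proof. by move=> HF; rewrite JlcoE lift_t3 //; lin. Qed.

Lemma Jrco_t3 (U : lmodType k) (F : J -> H -> U) h w h' : bilinear_map F ->
  \sum_(p <- Jrco (t3 h w h')) F p.1 p.2 = \sum_(q <- D h') F (t3 h w q.1) q.2.
Proof. by move=> HF; rewrite JrcoE lift_t3 //; lin. Qed.

Lemma Jlco_t3P (U : lmodType k) (F : H * J -> U) h w h' :
  bilinear_map (fun a b => F (a, b)) ->
  \sum_(p <- Jlco (t3 h w h')) F p = \sum_(q <- D h) F (q.1, t3 q.2 w h').
Proof.
move=> HF; rewrite -(Jlco_t3 _ _ _ HF); apply: eq_bigr => -[] //.
Qed.

Lemma Jrco_t3P (U : lmodType k) (F : J * H -> U) h w h' :
  bilinear_map (fun a b => F (a, b)) ->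
  \sum_(p <- Jrco (t3 h w h')) F p = \sum_(q <- D h') F (t3 h w q.1, q.2).
Proof.
move=> HF; rewrite -(Jrco_t3 _ _ _ HF); apply: eq_bigr => -[] //.
Qed.

Lemma Jlco_coassoc m :
  teq3 [seq (q.1, q.2, p.2) | p <- Jlco m, q <- D p.1]
       [seq (p.1, q.1, q.2) | p <- Jlco m, q <- Jlco p.2].
Proof.
move=> U F HF; rewrite !big_allpairs_dep /=.
apply: eq_bigr => -[[h w] h'] _ /=.
under [RHS]eq_bigr => q _ do (rewrite Jlco_t3P /=; last by lin).
by rewrite (D_coass HA (F := fun x y z => F x y (t3 z w h'))) //; lin.
Qed.

Lemma Jlco_counit m : \sum_(p <- Jlco m) eps p.1 *: p.2 = m.
Proof.
rewrite (JlcoP (fun p => eps p.1 *: p.2)) /= -[RHS]lift_t3id.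
apply: lift_eq => h w h'.
by rewrite (D_epsl HA (G := fun y => t3 y w h')) //; lin.
Qed.

Lemma Jrco_counit m : \sum_(p <- Jrco m) eps p.2 *: p.1 = m.
Proof.
rewrite (JrcoP (fun p => eps p.2 *: p.1)) /= -[RHS]lift_t3id.
apply: lift_eq => h w h'.
by rewrite (D_epsr HA (G := fun y => t3 h w y)) //; lin.
Qed.

Lemma Jrco_coassoc m :
  teq3 [seq (q.1, q.2, p.2) | p <- Jrco m, q <- Jrco p.1]
       [seq (p.1, q.1, q.2) | p <- Jrco m, q <- D p.2].
Proof.
move=> U F HF; rewrite !big_allpairs_dep /=.
apply: eq_bigr => -[[h w] h'] _ /=.
under eq_bigr => q _ do (rewrite Jrco_t3P /=; last by lin).
by rewrite (D_coass HA (F := fun x y z => F (t3 h w x) y z)) //; lin.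
Qed.

Lemma J_bicomodule m :
  teq3 [seq (q.1, q.2, p.2) | p <- Jrco m, q <- Jlco p.1]
       [seq (p.1, q.1, q.2) | p <- Jlco m, q <- Jrco p.2].
Proof.
move=> U F HF; rewrite !big_allpairs_dep /=.
apply: eq_bigr => -[[h w] h'] _ /=.
under eq_bigr => q _ do (rewrite Jlco_t3P /=; last by lin).
under [RHS]eq_bigr => q _ do (rewrite Jrco_t3P /=; last by lin).
by rewrite exchange_big.
Qed.

End J3.

Section J4.
Variables (k : fieldType) (H : algType k) (HA : hopf_algebra H) (V : lmodType k).
Local Notation D := (comul HA).
Local Notation eps := (counit HA).
Local Notation W := (Wt H V).
Local Notation J := (T3 H W H).
Local Notation Jl := (@Jl _ _ HA V).
Local Notation Jr := (@Jr _ _ HA V).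
Local Notation Jlco := (@Jlco _ _ HA V).
Local Notation Jrco := (@Jrco _ _ HA V).
Hint Resolve Jlco_lin Jrco_lin : tlin.

Lemma Jlco_lact h m :
  teq2 (Jlco (Jl h m)) [seq (q.1 * p.1, Jl q.2 p.2) | q <- D h, p <- Jlco m].
Proof.
move=> U F HF; rewrite JlcoE [RHS]big_allpairs_dep /= /Jl lift_comp /=; last by lin.
under [RHS]eq_bigr => q _ do rewrite JlcoP /=.
rewrite -lift_phi_sum; apply: lift_eq => a w a' /=.
rewrite /phiL lift_sum2 /=; last by lin.
under [RHS]eq_bigr => q _ do under eq_bigr => r _ do (rewrite lift_t3; last by lin).
under eq_bigr => i _ do under eq_bigr => j _ do (rewrite D_mulP /=; last by lin).
under eq_bigr => i _ do rewrite exchange_big /=.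
rewrite (D_coass HA (F := fun x y z => \sum_(v <- D z) \sum_(s <- D a)
   F (x * s.1) (t3 (y * s.2) (wl v.1 w) (v.2 * a')))) /=; last by lin.
under [RHS]eq_bigr => q _ do under eq_bigr => r _ do
  (rewrite (bi2_sum _ _ _ HF); under eq_bigr => q0 _ do rewrite (bi2_sum _ _ _ HF)).
under [RHS]eq_bigr => q _ do rewrite exchange_big /=.
under [RHS]eq_bigr => q _ do under eq_bigr => q0 _ do rewrite exchange_big /=.
apply: eq_bigr => q _; apply: eq_bigr => q0 _; apply: eq_bigr => r0 _.
by apply: eq_bigr => r _; rewrite ?mulrA.
Qed.

Lemma Jlco_ract m h :
  teq2 (Jlco (Jr m h)) [seq (p.1 * q.1, Jr p.2 q.2) | p <- Jlco m, q <- D h].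
Proof.
move=> U F HF; rewrite JlcoE [RHS]big_allpairs_dep /= /Jr lift_comp /=; last by lin.
rewrite JlcoP /=; apply: lift_eq => a w a' /=.
rewrite /phiR lift_sum2 /=; last by lin.
under [RHS]eq_bigr => q _ do under eq_bigr => r _ do (rewrite lift_t3; last by lin).
under eq_bigr => i _ do under eq_bigr => j _ do (rewrite D_mulP /=; last by lin).
under eq_bigr => q _ do rewrite exchange_big /=.
under eq_bigr => q _ do under eq_bigr => s _ do rewrite exchange_big /=.
under eq_bigr => q _ do rewrite exchange_big /=.
under eq_bigr => q _ do under eq_bigr => s _ do rewrite exchange_big /=.
rewrite (D_coass HA (F := fun x y z => \sum_(r <- D z) \sum_(s <- D a)
   F (s.1 * x) (t3 (s.2 * y) (wr w r.1) (a' * r.2)))) /=; last by lin.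
under [RHS]eq_bigr => q _ do under eq_bigr => r _ do
  (rewrite (bi2_sum _ _ _ HF); under eq_bigr => q0 _ do rewrite (bi2_sum _ _ _ HF)).
rewrite [RHS]exchange_big /=.
under [RHS]eq_bigr => q _ do rewrite exchange_big /=.
under [RHS]eq_bigr => q _ do under eq_bigr => q0 _ do rewrite exchange_big /=.
apply: eq_bigr => q _; apply: eq_bigr => q0 _; apply: eq_bigr => r0 _.
by apply: eq_bigr => r _; rewrite ?mulrA.
Qed.

Lemma Jrco_lact h m :
  teq2 (Jrco (Jl h m)) [seq (Jl q.1 p.1, q.2 * p.2) | q <- D h, p <- Jrco m].
Proof.
move=> U F HF; rewrite JrcoE [RHS]big_allpairs_dep /= /Jl lift_comp /=; last by lin.
under [RHS]eq_bigr => q _ do rewrite JrcoP /=.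
rewrite -lift_phi_sum; apply: lift_eq => a w a' /=.
rewrite /phiL lift_sum2 /=; last by lin.
under [RHS]eq_bigr => q _ do under eq_bigr => r _ do (rewrite lift_t3; last by lin).
under eq_bigr => i _ do under eq_bigr => j _ do (rewrite D_mulP /=; last by lin).
under [RHS]eq_bigr => q _ do under eq_bigr => r _ do
  (rewrite (bi1_sum _ _ _ HF); under eq_bigr => q0 _ do rewrite (bi1_sum _ _ _ HF)).
under [RHS]eq_bigr => q _ do rewrite exchange_big /=.
under [RHS]eq_bigr => q _ do under eq_bigr => q0 _ do rewrite exchange_big /=.
rewrite (D_coass4 (HA := HA) (K := fun x1 x2 x3 x4 => \sum_(s <- D a')
   F (t3 (x1 * a) (wl x2 w) (x3 * s.1)) (x4 * s.2))) /=; [|lin|move=> ?; lin].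
apply: eq_bigr => q _; apply: eq_bigr => q0 _; apply: eq_bigr => r0 _.
by apply: eq_bigr => r _; rewrite ?mulrA.
Qed.

Lemma Jrco_ract m h :
  teq2 (Jrco (Jr m h)) [seq (Jr p.1 q.1, p.2 * q.2) | p <- Jrco m, q <- D h].
Proof.
move=> U F HF; rewrite JrcoE [RHS]big_allpairs_dep /= /Jr lift_comp /=; last by lin.
rewrite JrcoP /=; apply: lift_eq => a w a' /=.
rewrite /phiR lift_sum2 /=; last by lin.
under [RHS]eq_bigr => q _ do under eq_bigr => r _ do (rewrite lift_t3; last by lin).
under eq_bigr => i _ do under eq_bigr => j _ do (rewrite D_mulP /=; last by lin).
under [RHS]eq_bigr => q _ do under eq_bigr => r _ do
  (rewrite (bi1_sum _ _ _ HF); under eq_bigr => q0 _ do rewrite (bi1_sum _ _ _ HF)).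
rewrite [RHS]exchange_big /=.
under [RHS]eq_bigr => q _ do rewrite exchange_big /=.
under [RHS]eq_bigr => q _ do under eq_bigr => q0 _ do rewrite exchange_big /=.
rewrite (D_coass4 (HA := HA) (K := fun x1 x2 x3 x4 => \sum_(s <- D a')
   F (t3 (a * x1) (wr w x2) (s.1 * x3)) (s.2 * x4))) /=; [|lin|move=> ?; lin].
under eq_bigr => q _ do under eq_bigr => r _ do rewrite exchange_big /=.
apply: eq_bigr => q _; apply: eq_bigr => q0 _; apply: eq_bigr => r0 _.
by apply: eq_bigr => r _; rewrite ?mulrA.
Qed.

End J4.

Section Adj.
Variables (k : fieldType) (H : algType k) (HA : hopf_algebra H) (V : lmodType k).
Local Notation D := (comul HA).
Local Notation eps := (counit HA).
Local Notation W := (Wt H V).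
Local Notation J := (T3 H W H).
Local Notation Jl := (@Jl _ _ HA V).
Local Notation Jr := (@Jr _ _ HA V).
Local Notation Jlco := (@Jlco _ _ HA V).
Local Notation Jrco := (@Jrco _ _ HA V).
Hint Resolve Jlco_lin Jrco_lin : tlin.

Definition Jhb : hopf_bimodule HA :=
  @HopfBimodule _ _ HA J Jl Jr Jlco Jrco
    (@Jl_linl _ _ HA V) (@Jl_lin _ _ HA V) (@Jr_lin _ _ HA V) (@Jr_linr _ _ HA V)
    (@Jl_mul _ _ HA V) (@Jl_one _ _ HA V) (@Jr_mul _ _ HA V) (@Jr_one _ _ HA V)
    (@Jlr _ _ HA V) (@Jlco_lin _ _ HA V) (@Jrco_lin _ _ HA V)
    (@Jlco_coassoc _ _ HA V) (@Jlco_counit _ _ HA V)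
    (@Jrco_coassoc _ _ HA V) (@Jrco_counit _ _ HA V) (@J_bicomodule _ _ HA V)
    (@Jlco_lact _ _ HA V) (@Jlco_ract _ _ HA V) (@Jrco_lact _ _ HA V) (@Jrco_ract _ _ HA V).

End Adj.

Section Uhat.
Variables (k : fieldType) (H : algType k) (HA : hopf_algebra H) (V : lmodType k).
Local Notation D := (comul HA).
Local Notation eps := (counit HA).
Local Notation W := (Wt H V).
Local Notation J := (T3 H W H).
Local Notation Jl := (@Jl _ _ HA V).
Local Notation Jr := (@Jr _ _ HA V).
Local Notation Jlco := (@Jlco _ _ HA V).
Local Notation Jrco := (@Jrco _ _ HA V).
Hint Resolve Jlco_lin Jrco_lin : tlin.
Variables (X : hopf_bimodule HA) (u : hb_sort X -> V) (Hu : klinear u).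
Hint Resolve Hu : klin.

Lemma ut_bil (x : hb_sort X) : bilinear_map (fun a b => u (lact a (ract x b))).
Proof. lin. Qed.

Definition ut (x : hb_sort X) : W := MkW (ut_bil x).

Lemma ut_lin : klinear ut.
Proof.
move=> c x y; apply: W_eq; apply: funext => a; apply: funext => b /=.
by rewrite ract_linl lact_linr Hu.
Qed.
Hint Resolve ut_lin : klin.

Lemma ut_lact h x : ut (lact h x) = wl h (ut x).
Proof.
apply: W_eq; apply: funext => a; apply: funext => b /=.
by rewrite lract lact_mul.
Qed.

Lemma ut_ract x h : ut (ract x h) = wr (ut x) h.
Proof.
apply: W_eq; apply: funext => a; apply: funext => b /=.
by rewrite ract_mul.
Qed.

Definition uhat (x : hb_sort X) : J :=
  \sum_(p <- lcoact x) \sum_(q <- rcoact p.2) t3 p.1 (ut q.1) q.2.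

Lemma uhat_lin : klinear uhat.
Proof. rewrite /uhat; lin. Qed.

Lemma uhat_lact h m : uhat (lact h m) = Jl h (uhat m).
Proof.
rewrite /uhat (teq2P (lcoact_lact h m)) /=; last by lin.
rewrite sum_pairs /=.

under eq_bigr => q _ do under eq_bigr => p _ do
  ((rewrite (teq2P (rcoact_lact q.2 p.2)); last by lin); rewrite sum_pairs /=).
rewrite /Jl lift_sum2 /=; last exact: phiL_tri.
rewrite /phiL exchange_big /=.
under eq_bigr => p _ do under eq_bigr => q _ do rewrite exchange_big /=.
under eq_bigr => p _ do rewrite exchange_big /=.
apply: eq_bigr => p _; apply: eq_bigr => r _; apply: eq_bigr => q _.
by apply: eq_bigr => q' _; rewrite ut_lact.
Qed.

Lemma uhat_ract m h : uhat (ract m h) = Jr (uhat m) h.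
Proof.
rewrite /uhat (teq2P (lcoact_ract m h)) /=; last by lin.
rewrite sum_pairs /=.
under eq_bigr => p _ do under eq_bigr => q _ do
  ((rewrite (teq2P (rcoact_ract p.2 q.2)); last by lin); rewrite sum_pairs /=).
rewrite /Jr lift_sum2 /=; last exact: phiR_tri.
rewrite /phiR.
under eq_bigr => p _ do rewrite exchange_big /=.
apply: eq_bigr => p _; apply: eq_bigr => r _; apply: eq_bigr => q _.
by apply: eq_bigr => q' _; rewrite ut_ract.
Qed.

Lemma uhat_lco m : teq2 (Jlco (uhat m)) [seq (p.1, uhat p.2) | p <- lcoact m].
Proof.
move=> U F HF; rewrite JlcoP /uhat lift_sum2 /=; last by lin.
rewrite sum_map /=.
under [RHS]eq_bigr => p _ do (rewrite (bi2_sum _ _ _ HF);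
  under eq_bigr => s _ do rewrite (bi2_sum _ _ _ HF)).
under eq_bigr => p _ do rewrite exchange_big /=.
have := teq3P (F := fun p => \sum_(q <- rcoact p.2) F p.1.1 (t3 p.1.2 (ut q.1) q.2))
  (lcoact_coassoc m).
rewrite !sum_pairs /= => ->; last by lin.
by [].
Qed.

Lemma uhat_rco m : teq2 (Jrco (uhat m)) [seq (uhat p.1, p.2) | p <- rcoact m].
Proof.
move=> U F HF; rewrite JrcoP /uhat lift_sum2 /=; last by lin.
rewrite sum_map /=.
under [RHS]eq_bigr => p _ do (rewrite (bi1_sum _ _ _ HF);
  under eq_bigr => s _ do rewrite (bi1_sum _ _ _ HF)).
under eq_bigr => p _ do (
  have := teq3P (F := fun r => F (t3 p.1 (ut r.1.1) r.1.2) r.2) (rcoact_coassoc p.2);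
  rewrite !sum_pairs /= => <-; last by lin).
have := teq3P (F := fun r => \sum_(q <- rcoact r.1.2) F (t3 r.1.1 (ut q.1) q.2) r.2)
  (bicomodule m).
rewrite !sum_pairs /= => <-; last by lin.
by [].
Qed.

Definition epsJ (j : J) : V := lift (fun h w h' => (eps h * eps h') *: wf w 1 1) j.

Lemma rco_eps (M : hopf_bimodule HA) (U : lmodType k) (g : hb_sort M -> U) y :
  klinear g -> \sum_(q <- rcoact y) eps q.2 *: g q.1 = g y.
Proof.
move=> Hg; rewrite -{2}(rcoact_counit y) kl_sum //.
by apply: eq_bigr => q _; rewrite klZ.
Qed.

Lemma lco_eps (M : hopf_bimodule HA) (U : lmodType k) (g : hb_sort M -> U) y :
  klinear g -> \sum_(q <- lcoact y) eps q.1 *: g q.2 = g y.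
Proof.
move=> Hg; rewrite -{2}(lcoact_counit y) kl_sum //.
by apply: eq_bigr => q _; rewrite klZ.
Qed.

Lemma epsJ_uhat x : epsJ (uhat x) = u x.
Proof.
rewrite /epsJ /uhat lift_sum2 /=; last by lin.
under eq_bigr => p _ do under eq_bigr => q _ do
  rewrite lact_one ract_one -scalerA.
under eq_bigr => p _ do rewrite -scaler_sumr (rco_eps _ Hu).
exact: lco_eps.
Qed.

End Uhat.

Ltac brw E := let E' := fresh "E" in have E' := E; rewrite /= in E'; rewrite E'; clear E'.

Section Uniq.
Variables (k : fieldType) (H : algType k) (HA : hopf_algebra H) (V : lmodType k).
Local Notation D := (comul HA).
Local Notation eps := (counit HA).
Local Notation W := (Wt H V).
Local Notation J := (T3 H W H).
Local Notation Jl := (@Jl _ _ HA V).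
Local Notation Jr := (@Jr _ _ HA V).
Local Notation Jlco := (@Jlco _ _ HA V).
Local Notation Jrco := (@Jrco _ _ HA V).
Local Notation epsJ := (@epsJ _ _ HA V).
Hint Resolve Jlco_lin Jrco_lin : tlin.

Definition epsT (j : J) : W := lift (fun h w h' => (eps h * eps h') *: w) j.

Lemma epsJ_lin : klinear epsJ.
Proof. apply: lift_lin; lin. Qed.

Lemma epsT_tri : trilinear_map (fun (h : H) (w : W) h' => (eps h * eps h') *: w).
Proof. lin. Qed.

Lemma epsT_lin : klinear epsT.
Proof. exact: lift_lin epsT_tri. Qed.
Hint Resolve epsT_lin : klin.

Lemma epsT_t3 h w h' : epsT (t3 h w h') = (eps h * eps h') *: w.
Proof. by rewrite /epsT lift_t3 //; apply: epsT_tri. Qed.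

Lemma scal2 (U : lmodType k) (a b : k) (v : U) : (a * b) *: v = a *: (b *: v).
Proof. by rewrite scalerA. Qed.

Lemma scal4 (U : lmodType k) (a b c d : k) (v : U) :
  ((a * b) * (c * d)) *: v = (b * d) *: (a *: (c *: v)).
Proof. by rewrite !scalerA; congr (_ *: _); ring. Qed.

Lemma epsT_lact a j : epsT (Jl a j) = wl a (epsT j).
Proof.
apply: (t3_ext (f := fun j => epsT (Jl a j)) (g := fun j => wl a (epsT j))).
- exact: (klinear_comp (@Jl_lin _ _ HA V a) epsT_lin).
- exact: (klinear_comp epsT_lin (wl_linr a)).
move=> h w h'; rewrite Jl_t3 /phiL epsT_t3 /epsT lift_sum2 /=; last exact: epsT_tri.
under eq_bigr => q _ do under eq_bigr => r _ do rewrite !counit_mul scal4.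
under eq_bigr => q _ do rewrite -scaler_sumr.
rewrite -scaler_sumr (klZ (wl_linr a)); congr (_ *: _).
under eq_bigr => q _ do rewrite -scaler_sumr.
under eq_bigr => q _ do brw (D_epsr HA q.2 (wl_linl w)).
by brw (D_epsl HA a (wl_linl w)).
Qed.

Lemma epsT_ract j b : epsT (Jr j b) = wr (epsT j) b.
Proof.
apply: (t3_ext (f := fun j => epsT (Jr j b)) (g := fun j => wr (epsT j) b)).
- exact: (klinear_comp (@Jr_lin _ _ HA V b) epsT_lin).
- exact: (klinear_comp epsT_lin (wr_linl b)).
move=> h w h'; rewrite Jr_t3 /phiR epsT_t3 /epsT lift_sum2 /=; last exact: epsT_tri.
under eq_bigr => q _ do under eq_bigr => r _ do rewrite !counit_mul [eps h * _]mulrC [eps h' * _]mulrC scal4.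
under eq_bigr => q _ do rewrite -scaler_sumr.
rewrite -scaler_sumr (klZ (wr_linl b)); congr (_ *: _).
under eq_bigr => q _ do rewrite -scaler_sumr.
under eq_bigr => q _ do brw (D_epsr HA q.2 (wr_linr w)).
by brw (D_epsl HA b (wr_linr w)).
Qed.

Lemma wf_sum I (r : seq I) (F : I -> W) a b :
  wf (\sum_(i <- r) F i) a b = \sum_(i <- r) wf (F i) a b.
Proof. by elim: r => [|i r IH]; rewrite ?big_nil ?big_cons //= -IH. Qed.

Lemma epsJ_epsT j : epsJ j = wf (epsT j) 1 1.
Proof. by rewrite /epsJ /epsT /lift /ev wf_sum. Qed.

Lemma wf_epsT j a b : wf (epsT j) a b = epsJ (Jl a (Jr j b)).
Proof. by rewrite epsJ_epsT epsT_lact epsT_ract /= mul1r mulr1. Qed.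

Lemma recon j : j = \sum_(p <- Jlco j) \sum_(q <- Jrco p.2) t3 p.1 (epsT q.1) q.2.
Proof.
rewrite JlcoP -{1}[j]lift_t3id; apply: lift_eq => h w h' /=.
under eq_bigr => q _ do (rewrite Jrco_t3P /=; last by lin).
under eq_bigr => q _ do under eq_bigr => r _ do rewrite epsT_t3.
under eq_bigr => q _ do under eq_bigr => r _ do rewrite t3Z2 scal2.
under eq_bigr => q _ do rewrite -scaler_sumr.
have L1 : forall a : H, klinear (fun y : H => t3 a w y) by move=> a; lin.
have L2 : klinear (fun y : H => t3 y w h') by lin.
under eq_bigr => q _ do brw (D_epsl HA h' (L1 q.1)).
by brw (D_epsr HA h L2).
Qed.

Lemma g_recon (X : hopf_bimodule HA) (g : hb_sort X -> J) :
  hb_morphism (M := X) (N := Jhb HA V) g -> forall x,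
  g x = \sum_(p <- lcoact x) \sum_(q <- rcoact p.2) t3 p.1 (epsT (g q.1)) q.2.
Proof.
case=> Hg _ _ Hl Hr x.
rewrite {1}(recon (g x)).
rewrite (teq2P (Hl x)) /=; last by lin.
rewrite (sum_map (U := J)) /=.
apply: eq_bigr => p _.
rewrite (teq2P (Hr p.2)) /=; last by lin.
by rewrite (sum_map (U := J)).
Qed.

Lemma uniq_morph (X : hopf_bimodule HA) (g1 g2 : hb_sort X -> J) :
  hb_morphism (M := X) (N := Jhb HA V) g1 ->
  hb_morphism (M := X) (N := Jhb HA V) g2 ->
  (forall x, epsJ (g1 x) = epsJ (g2 x)) -> forall x, g1 x = g2 x.
Proof.
move=> H1 H2 E.
have ET : forall x, epsT (g1 x) = epsT (g2 x).
  move=> x; apply: W_eq; apply: funext => a; apply: funext => b.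
  case: H1 => _ L1 R1 _ _; case: H2 => _ L2 R2 _ _.
  have R1' : forall m h, Jr (g1 m) h = g1 (ract m h) by move=> m h; rewrite R1.
  have R2' : forall m h, Jr (g2 m) h = g2 (ract m h) by move=> m h; rewrite R2.
  have L1' : forall h m, Jl h (g1 m) = g1 (lact h m) by move=> h m; rewrite L1.
  have L2' : forall h m, Jl h (g2 m) = g2 (lact h m) by move=> h m; rewrite L2.
  by rewrite !wf_epsT R1' R2' L1' L2'.
move=> x; rewrite (g_recon H1) (g_recon H2).
by apply: eq_bigr => p _; apply: eq_bigr => q _; rewrite ET.
Qed.

End Uniq.

Section Ext.
Variables (k : fieldType) (A B V : lmodType k) (i : A -> B) (u : A -> V).
Hypotheses (Hi : klinear i) (Hinj : injective i) (Hu : klinear u).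

Definition PG (G : B * V -> Prop) : Prop :=
  [/\ forall b v v', G (b, v) -> G (b, v') -> v = v',
      forall c b1 v1 b2 v2, G (b1, v1) -> G (b2, v2) -> G (c *: b1 + b2, c *: v1 + v2)
    & forall a, G (i a, u a)].

Definition G0 (bv : B * V) : Prop := exists a, bv = (i a, u a).

Lemma PG0 : PG G0.
Proof.
split.
- move=> b v v' [a E] [a' E']; case: E => Eb Ev; case: E' => Eb' Ev'.
  by subst; rewrite (Hinj Eb').
- move=> c b1 v1 b2 v2 [a1 E1] [a2 E2]; case: E1 => -> ->; case: E2 => -> ->.
  by exists (c *: a1 + a2); rewrite Hi Hu.
- by move=> a; exists a.
Qed.

Definition TG := {G : B * V -> Prop | PG G}.
Definition RG (G1 G2 : TG) : bool := `[< forall bv, sval G1 bv -> sval G2 bv >].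

Lemma ext_exists : exists v : B -> V, klinear v /\ forall a, v (i a) = u a.
Proof.
have [t tmax] : exists t, classical_sets.premaximal RG t.
  apply: (@classical_sets.ZL_preorder TG (exist _ G0 PG0) RG).
- by move=> G; apply/asboolP.
- move=> G1 G2 G3 /asboolP H12 /asboolP H23; apply/asboolP => bv /H12; exact: H23.
- move=> AA Atot.
  have [[G AG]|Aempty] := pselect (exists G, AA G); last first.
    exists (exist _ G0 PG0) => s As; exfalso; apply: Aempty; by exists s.
  pose Un (bv : B * V) := exists G', AA G' /\ sval G' bv.
  have tot2 : forall G1 G2, AA G1 -> AA G2 ->
      exists G3, AA G3 /\ (forall bv, sval G1 bv -> sval G3 bv) /\
                          (forall bv, sval G2 bv -> sval G3 bv).
    move=> G1 G2 A1 A2; case: (Atot G1 G2 A1 A2) => /asboolP H12.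
    + by exists G2; split.
    + by exists G1; split.
  have PUn : PG Un.
    split.
    - move=> b v v' [G1 [A1 H1]] [G2 [A2 H2]].
      have [G3 [A3 [S1 S2]]] := tot2 _ _ A1 A2.
      by case: (svalP G3) => F _ _; apply: (F b); [apply: S1 | apply: S2].
    - move=> c b1 v1 b2 v2 [G1 [A1 H1]] [G2 [A2 H2]].
      have [G3 [A3 [S1 S2]]] := tot2 _ _ A1 A2.
      exists G3; split => //.
      by case: (svalP G3) => _ L _; apply: L; [apply: S1 | apply: S2].
    - by move=> a; exists G; split => //; case: (svalP G) => _ _ E.
  exists (exist _ Un PUn) => s As; apply/asboolP => bv Hs /=.
  by exists s.
case: t tmax => G PGG tmax.
have Gfun : forall b, exists v, G (b, v).
  move=> b; apply: contrapT => Nb.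
  have Nb' : forall v, ~ G (b, v) by move=> v Gv; apply: Nb; exists v.
  case: (PGG) => Gf Gl Ge.
  have G00 : G (0, 0) by have := Ge 0; rewrite (kl0 Hi) (kl0 Hu).
  pose G' (bv : B * V) := exists c b0 v0, G (b0, v0) /\ bv = (b0 + c *: b, v0).
  have PG' : PG G'.
    split.
    - move=> b1 v v' [c [b0 [v0 [G1 E1]]]] [c' [b0' [v0' [G1' E1']]]].
      case: E1 => Eb1 Ev; case: E1' => Eb1' Ev'; subst v v'.
      have [Ec|Nc] := eqVneq c c'.
        subst c'; have Eb0 : b0 = b0'.
          by move: Eb1'; rewrite Eb1 => /addIr.
        by subst b0'; apply: (Gf b0).
      exfalso; apply: (Nb' ((c' - c)^-1 *: (v0 - v0'))).
      have E : b0 + c *: b = b0' + c' *: b by rewrite -Eb1 -Eb1'.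
      have E2 : (c' - c) *: b = b0 - b0'.
        have -> : b0 - b0' = (b0 + c *: b) - (b0' + c *: b).
          by rewrite opprD addrACA subrr addr0.
        by rewrite E opprD addrACA subrr add0r scalerBl.
      have Hb : b = (c' - c)^-1 *: (b0 - b0').
        by rewrite -E2 scalerA mulVf ?scale1r // subr_eq0 eq_sym.
      rewrite Hb.
      have := Gl (c' - c)^-1 (b0 - b0') (v0 - v0') 0 0; rewrite !addr0; apply => //.
      have := Gl (-1) b0' v0' b0 v0 G1' G1; rewrite !scaleN1r.
      by rewrite (addrC (- b0')) (addrC (- v0')).
    - move=> d b1 v1 b2 v2 [c1 [b01 [v01 [G1 E1]]]] [c2 [b02 [v02 [G2 E2]]]].
      case: E1 => -> ->; case: E2 => -> ->.
      exists (d * c1 + c2), (d *: b01 + b02), (d *: v01 + v02); split.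
        exact: Gl.
      congr (_, _); rewrite scalerDr scalerDl scalerA.
      by rewrite -!addrA; congr (_ + _); rewrite addrCA.
    - by move=> a; exists 0, (i a), (u a); rewrite scale0r addr0.
  have R1 : RG (exist _ G PGG) (exist _ G' PG').
    apply/asboolP => -[b0 v0] /= Gb; exists 0, b0, v0; split => //.
    by rewrite scale0r addr0.
  have /asboolP /= R2 := tmax _ R1.
  apply: (Nb' 0); apply: R2; exists 1, 0, 0; split => //.
  by rewrite scale1r add0r.
pose v (b : B) : V := projT1 (cid (Gfun b)).
have vP : forall b, G (b, v b) by move=> b; rewrite /v; case: cid.
case: (PGG) => Gf Gl Ge.
exists v; split.
- by move=> c x y; apply: (Gf (c *: x + y)); [apply: vP | apply: Gl; apply: vP].
- by move=> a; apply: (Gf (i a)); [apply: vP | apply: Ge].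
Qed.

End Ext.

Section Final.
Variables (k : fieldType) (H : algType k) (HA : hopf_algebra H).

Lemma uhat_morph (V : lmodType k) (X : hopf_bimodule HA) (u : hb_sort X -> V)
  (Hu : klinear u) : hb_morphism (N := Jhb HA V) (uhat Hu).
Proof.
split.
- exact: uhat_lin.
- exact: uhat_lact.
- exact: uhat_ract.
- exact: uhat_lco.
- exact: uhat_rco.
Qed.

Lemma teq2_eqmap (A B : lmodType k) I (s : seq I) (f g : I -> A * B) :
  f =1 g -> teq2 [seq f x | x <- s] [seq g x | x <- s].
Proof. by move=> E; rewrite (eq_map E). Qed.

Lemma comp_morph (A B C : hopf_bimodule HA) (f : hb_sort A -> hb_sort B)
  (g : hb_sort B -> hb_sort C) :
  hb_morphism f -> hb_morphism g -> hb_morphism (fun x => g (f x)).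
Proof.
case=> Lf Af Rf Cf Df; case=> Lg Ag Rg Cg Dg; split.
- exact: klinear_comp Lf Lg.
- by move=> h m; rewrite Af Ag.
- by move=> m h; rewrite Rf Rg.
- move=> m; apply: teq2_trans (Cg (f m)) _.
  have := teq2_map (@kl_idf _ _) Lg (Cf m); rewrite -map_comp.
  by apply: teq2_trans; apply: teq2_eqmap => -[].
- move=> m; apply: teq2_trans (Dg (f m)) _.
  have := teq2_map Lg (@kl_idf _ _) (Df m); rewrite -map_comp.
  by apply: teq2_trans; apply: teq2_eqmap => -[].
Qed.

Lemma J_injective (V : lmodType k) : hb_injective (Jhb HA V).
Proof.
move=> A B C i p [Mi Mp Iinj Psurj Pker].
have Mi' := Mi; have Mp' := Mp.
case: Mi' => Li Ai Ri Ci Di; case: Mp' => Lp Ap Rp Cp Dp.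
have pi0 : forall a, p (i a) = 0 by move=> a; apply/Pker; exists a.
split.
- by move=> h Hh Hhp c; have [b <-] := Psurj c; apply: Hhp.
- move=> g Hg; case: (Hg) => Lg Ag Rg Cg Dg; split; last first.
    by case=> h [[Lh _ _ _ _] E] a; rewrite E pi0 (kl0 Lh).
  move=> gi0.
  have key : forall b b', p b = p b' -> g b = g b'.
    move=> b b' E.
    have : p (b + (-1) *: b') = 0.
      by rewrite (kl_add Lp) (klZ Lp) E scaleN1r subrr.
    case/Pker => a Ea.
    have : g (b + (-1) *: b') = 0 by rewrite Ea gi0.
    rewrite (kl_add Lg) (klZ Lg) scaleN1r => /eqP; rewrite subr_eq0 => /eqP //.
  pose pre c := projT1 (cid (Psurj c)).
  have preP : forall c, p (pre c) = c by move=> c; rewrite /pre; case: cid.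
  pose h c := g (pre c).
  have hpg : forall b, h (p b) = g b by move=> b; apply: key; rewrite preP.
  have Lh : klinear h.
    move=> c x y.
    have -> : c *: h x + h y = h (p (c *: pre x + pre y)).
      by rewrite hpg /h (kl_add Lg) (klZ Lg).
    by rewrite (kl_add Lp) (klZ Lp) !preP.
  exists h; split; last by move=> b; rewrite hpg.
  split => //.
  + by move=> a c; rewrite -{1}(preP c) -Ap hpg Ag.
  + by move=> c a; rewrite -{1}(preP c) -Rp hpg Rg.
  + move=> c; rewrite /h; apply: teq2_trans (Cg (pre c)) _.
    have := teq2_map (@kl_idf _ _) Lh (Cp (pre c)); rewrite preP -map_comp => E.
    apply: teq2_trans (teq2_sym E); apply: teq2_eqmap => -[x y] /=.
    by rewrite hpg.
  + move=> c; rewrite /h; apply: teq2_trans (Dg (pre c)) _.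
    have := teq2_map Lh (@kl_idf _ _) (Dp (pre c)); rewrite preP -map_comp => E.
    apply: teq2_trans (teq2_sym E); apply: teq2_eqmap => -[x y] /=.
    by rewrite hpg.
- move=> g Hg.
  have Lu : klinear (fun a => epsJ HA (g a)).
    case: Hg => Lg _ _ _ _; exact: (klinear_comp Lg (@epsJ_lin _ _ HA V)).
  have [v [Lv Ev]] := ext_exists Li Iinj Lu.
  exists (uhat (X := B) Lv); split; first exact: uhat_morph.
  apply: uniq_morph => //.
    exact: comp_morph Mi (uhat_morph Lv).
  by move=> a /=; rewrite epsJ_uhat Ev.
Qed.

End Final.

Theorem theorem3p1 (k : fieldType) (H : algType k) (HA : hopf_algebra H)
    (M : hopf_bimodule HA) :
  exists (J : hopf_bimodule HA) (f : hb_sort M -> hb_sort J),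
    hb_injective J /\ hb_morphism f /\ injective f.
Proof.
exists (Jhb HA (hb_sort M)), (uhat (X := M) (@kl_idf _ (hb_sort M))).
split; first exact: J_injective.
split; first exact: uhat_morph.
move=> x y E; have := congr1 (@epsJ _ _ HA (hb_sort M)) E.
by rewrite !epsJ_uhat.
Qed.
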